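(* Let $\mathcal{H}$ be a complex Hilbert space and let $K$ be the convex set of density operators on $\mathcal{H}$. Then for any projection operators $E,F$ that are extreme points of $K$ (i.e. rank-one projections), the affine ratio satisfies $\langle E,F\rangle_K=\mathrm{Tr}(EF)$.
   Context: For a convex set $K$, let $A(K)$ be the set of affine functions $K\to\mathbb{R}$. For extreme points $x,y$ of $K$, the affine ratio (transition probability) is $\langle x,y\rangle_K=\inf\{f(y): f\in A(K),\ \mathrm{range}(f)\subseteq[0,1],\ f(x)=1\}$. *)

(* Defs.v *)
From mathcomp Require Import all_boot all_order all_algebra.
From mathcomp Require Import complex.
From mathcomp Require Import reals.
Set Implicit Arguments. Unset Strict Implicit. Unset Printing Implicit Defensive.
Import Order.TTheory GRing.Theory Num.Theory.
Local Open Scope ring_scope.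
Local Open Scope complex_scope.

Section Hilbert.
Variables (R : realType) (V : lmodType R[i]) (ip : V -> V -> R[i]).

Definition hnorm (x : V) : R := Num.sqrt (complex.Re (ip x x)).

Definition is_hilbert : Prop :=
  [/\ (forall (a : R[i]) (x y z : V), ip (a *: x + y) z = a * ip x z + ip y z),
      (forall x y : V, ip y x = (ip x y)^*),
      (forall x : V, 0 <= ip x x),
      (forall x : V, ip x x = 0 -> x = 0) &
      (forall u : nat -> V,
         (forall e : R, 0 < e -> exists N : nat, forall m n : nat,
             (N <= m)%N -> (N <= n)%N -> hnorm (u m - u n) < e) ->
         exists l : V, forall e : R, 0 < e -> exists N : nat, forall n : nat,
             (N <= n)%N -> hnorm (u n - l) < e)].

Definition is_linear (T : V -> V) : Prop :=
  forall (a : R[i]) (x y : V), T (a *: x + y) = a *: T x + T y.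

Definition is_bounded (T : V -> V) : Prop :=
  exists M : R, forall x : V, hnorm (T x) <= M * hnorm x.

Definition is_positive (T : V -> V) : Prop :=
  forall x : V, 0 <= ip (T x) x.

Definition is_projection (E : V -> V) : Prop :=
  (forall v : V, E (E v) = E v) /\ (forall u v : V, ip (E u) v = ip u (E v)).

Definition orthonormal_basis (B : V -> Prop) : Prop :=
  [/\ (forall b, B b -> ip b b = 1),
      (forall b c, B b -> B c -> b <> c -> ip b c = 0) &
      (forall x, (forall b, B b -> ip x b = 0) -> x = 0)].

(* unordered summation over the (possibly infinite) family B:
   the net of finite partial sums converges to c *)
Definition has_sum (B : V -> Prop) (g : V -> R[i]) (c : R[i]) : Prop :=
  forall e : R, 0 < e -> exists S0 : seq V, (forall b, b \in S0 -> B b) /\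
    forall S : seq V, uniq S -> (forall b, b \in S -> B b) ->
      {subset S0 <= S} -> `|\sum_(b <- S) g b - c| < e%:C.

Definition has_trace (T : V -> V) (c : R[i]) : Prop :=
  forall B : V -> Prop, orthonormal_basis B -> has_sum B (fun b => ip (T b) b) c.

Definition density : (V -> V) -> Prop :=
  fun rho => [/\ is_linear rho, is_bounded rho, is_positive rho & has_trace rho 1].

End Hilbert.

Section Convex.
Variables (R : realType) (V : lmodType R[i]).

Definition cvx (t : R) (x y : V -> V) : V -> V :=
  fun v => t%:C *: x v + (1 - t)%:C *: y v.

Definition affine_on (K : (V -> V) -> Prop) (f : (V -> V) -> R) : Prop :=
  forall x y (t : R), K x -> K y -> 0 <= t <= 1 ->
    f (cvx t x y) = t * f x + (1 - t) * f y.

Definition extreme_point (K : (V -> V) -> Prop) (x : V -> V) : Prop :=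
  K x /\ forall y z (t : R), K y -> K z -> 0 < t < 1 -> x = cvx t y z ->
    y = x /\ z = x.

Definition affine_ratio (K : (V -> V) -> Prop) (x y : V -> V) : R :=
  inf (fun r : R => exists f : (V -> V) -> R,
         [/\ affine_on K f, (forall z, K z -> 0 <= f z <= 1), f x = 1 & r = f y]).

End Convex.

(* Main.v *)
Require Import Defs.
From mathcomp Require Import all_boot all_order all_algebra.
From mathcomp Require Import complex.
From mathcomp Require Import reals.
From mathcomp Require Import boolp classical_sets.
From mathcomp Require Import ring lra.
Import Order.TTheory GRing.Theory Num.Theory.
Local Open Scope ring_scope.
Local Open Scope complex_scope.

Section IP.
Variables (R : realType) (V : lmodType R[i]) (ip : V -> V -> R[i]).
Hypothesis HV : is_hilbert ip.

Lemma ipl a x y z : ip (a *: x + y) z = a * ip x z + ip y z.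
Proof. by case: HV => h _ _ _ _; apply: h. Qed.
Lemma ipC x y : ip y x = Num.conj (ip x y).
Proof. by case: HV => _ h _ _ _; apply: h. Qed.
Lemma ippos x : 0 <= ip x x.
Proof. by case: HV => _ _ h _ _; apply: h. Qed.
Lemma ipdef x : ip x x = 0 -> x = 0.
Proof. by case: HV => _ _ _ h _; apply: h. Qed.

Lemma ipDl x y z : ip (x + y) z = ip x z + ip y z.
Proof. by rewrite -{1}[x]scale1r ipl mul1r. Qed.
Lemma ip0l z : ip 0 z = 0.
Proof. by apply/(addrI (ip 0 z)); rewrite -ipDl !addr0. Qed.
Lemma ipZl a x z : ip (a *: x) z = a * ip x z.
Proof. by rewrite -[a *: x]addr0 ipl ip0l addr0. Qed.
Lemma ipNl x z : ip (- x) z = - ip x z.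
Proof. by rewrite -scaleN1r ipZl mulN1r. Qed.
Lemma ipBl x y z : ip (x - y) z = ip x z - ip y z.
Proof. by rewrite ipDl ipNl. Qed.
Lemma ipDr x y z : ip x (y + z) = ip x y + ip x z.
Proof. by rewrite (ipC (y + z)) ipDl rmorphD /= -!ipC. Qed.
Lemma ipZr a x y : ip x (a *: y) = Num.conj a * ip x y.
Proof. by rewrite (ipC (a *: y)) ipZl rmorphM /= -ipC. Qed.
Lemma ip0r z : ip z 0 = 0.
Proof. by rewrite ipC ip0l rmorph0. Qed.
Lemma ipNr x z : ip z (- x) = - ip z x.
Proof. by rewrite -scaleN1r ipZr rmorphN1 mulN1r. Qed.
Lemma ipBr x y z : ip z (x - y) = ip z x - ip z y.
Proof. by rewrite ipDr ipNr. Qed.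
Lemma ip_suml (I : Type) (s : seq I) (F : I -> V) z :
  ip (\sum_(i <- s) F i) z = \sum_(i <- s) ip (F i) z.
Proof. elim: s => [|a s IH]; first by rewrite !big_nil ip0l.
by rewrite !big_cons ipDl IH. Qed.
Lemma ip_sumr (I : Type) (s : seq I) (F : I -> V) z :
  ip z (\sum_(i <- s) F i) = \sum_(i <- s) ip z (F i).
Proof. elim: s => [|a s IH]; first by rewrite !big_nil ip0r.
by rewrite !big_cons ipDr IH. Qed.

Lemma ge0_real (z : R[i]) : 0 <= z -> z = (complex.Re z)%:C.
Proof. by case: z => a b; rewrite lecE /= => /andP[/eqP -> _]. Qed.

Lemma conjR (r : R) : Num.conj (r%:C) = r%:C.
Proof. by rewrite conj_Creal // complex_real. Qed.

Definition N x := complex.Re (ip x x).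
Lemma Nip x : ip x x = (N x)%:C.
Proof. exact: ge0_real (ippos x). Qed.
Lemma Nge0 x : 0 <= N x.
Proof. by rewrite -lecR -Nip ippos. Qed.
Lemma N0 x : N x = 0 -> x = 0.
Proof. by move=> h; apply: ipdef; rewrite Nip h. Qed.

Lemma Re_realM (r : R) (z : R[i]) : complex.Re (r%:C * z) = r * complex.Re z.
Proof. by case: z => a b /=; rewrite mul0r subr0. Qed.

Lemma ReB (a b : R[i]) : complex.Re (a - b) = complex.Re a - complex.Re b.
Proof. by case: a; case: b. Qed.
Lemma ReD (a b : R[i]) : complex.Re (a + b) = complex.Re a + complex.Re b.
Proof. by case: a; case: b. Qed.
Lemma ImD (a b : R[i]) : complex.Im (a + b) = complex.Im a + complex.Im b.
Proof. by case: a; case: b. Qed.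

Lemma mulJ_real (z : R[i]) : z * Num.conj z = (complex.Re (z * Num.conj z))%:C.
Proof. exact: ge0_real (mul_conjC_ge0 z). Qed.
Lemma ReJge0 (z : R[i]) : 0 <= complex.Re (z * Num.conj z).
Proof. by rewrite -lecR -mulJ_real mul_conjC_ge0. Qed.

Lemma CS x y : complex.Re (ip x y * ip y x) <= N x * N y.
Proof.
have [Ny0|Nyn0] := eqVneq (N y) 0.
  by rewrite Ny0 mulr0 (N0 _ Ny0) ip0r mul0r.
have Nyp : 0 < N y by rewrite lt_def Nyn0 Nge0.
pose z := (N y)%:C *: x - ip x y *: y.
have hz : ip z z = ((N y)^+2 * N x)%:C - (N y)%:C * (ip x y * ip y x).
  rewrite /z !ipBl !ipBr !ipZl !ipZr !Nip !conjR -(ipC x y).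
  rewrite rmorphM rmorphXn /=. ring.
have h : N z = N y ^+ 2 * N x - N y * complex.Re (ip x y * ip y x).
  by rewrite /N hz ReB Re_realM.
have := Nge0 z; rewrite h => h2.
have : N y * complex.Re (ip x y * ip y x) <= N y * (N x * N y) by nra.
by rewrite ler_pM2l.
Qed.


Lemma Re_sum (s : seq V) (F : V -> R[i]) :
  complex.Re (\sum_(b <- s) F b) = \sum_(b <- s) complex.Re (F b).
Proof. elim: s => [|a s IH]; first by rewrite !big_nil.
by rewrite !big_cons ReD IH. Qed.

Lemma sub_sum_le (T S : seq V) (F : V -> R) : uniq T -> uniq S ->
  {subset T <= S} -> (forall b, b \in S -> 0 <= F b) ->
  \sum_(b <- T) F b <= \sum_(b <- S) F b.
Proof.
move=> uT uS TS F0; rewrite [X in _ <= X](bigID (fun i => i \in T)) /=.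
have -> : \sum_(i <- S | i \in T) F i = \sum_(i <- T) F i.
  rewrite -big_filter; apply: perm_big; apply: uniq_perm.
  - exact: filter_uniq.
  - exact: uT.
  by move=> x; rewrite mem_filter; case xT: (x \in T) => //=; rewrite TS.
by rewrite lerDl big_seq_cond; apply: sumr_ge0 => i /andP[iS _]; apply: F0.
Qed.

Lemma has_sum_le {B : V -> Prop} {g : V -> R[i]} {c} :
  (forall b, B b -> 0 <= g b) -> has_sum B g c ->
  forall T : seq V, uniq T -> (forall b, b \in T -> B b) ->
  complex.Re (\sum_(b <- T) g b) <= complex.Re c.
Proof.
move=> g0 hs T uT TB; rewrite leNgt; apply/negP => hlt.
have hd : 0 < complex.Re (\sum_(b <- T) g b) - complex.Re c by rewrite subr_gt0.
have [S0 [S0B hS0]] := hs _ hd.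
pose S := undup (T ++ S0).
have uS : uniq S by exact: undup_uniq.
have SB : forall b, b \in S -> B b.
  by move=> b; rewrite mem_undup mem_cat => /orP[/TB|/S0B].
have S0S : {subset S0 <= S} by move=> b bS; rewrite mem_undup mem_cat bS orbT.
have h := hS0 S uS SB S0S.
have h2 := le_lt_trans (normc_ge_Re _) h.
rewrite ltcR ReB in h2.
have h3 : complex.Re (\sum_(b <- T) g b) <= complex.Re (\sum_(b <- S) g b).
  rewrite !Re_sum; apply: sub_sum_le => //.
    by move=> b bT; rewrite mem_undup mem_cat bT.
  by move=> b /SB /g0; rewrite lecE => /andP[_].
have h4 := ler_norm (complex.Re (\sum_(b <- S) g b) - complex.Re c).
lra.
Qed.

Lemma has_sumD {B : V -> Prop} {g1 g2 : V -> R[i]} {c1 c2} :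
  has_sum B g1 c1 -> has_sum B g2 c2 ->
  has_sum B (fun b => g1 b + g2 b) (c1 + c2).
Proof.
move=> h1 h2 e e0.
have e20 : 0 < e / 2 by rewrite divr_gt0.
have [S1 [S1B H1]] := h1 _ e20; have [S2 [S2B H2]] := h2 _ e20.
exists (S1 ++ S2); split.
  by move=> b; rewrite mem_cat => /orP[/S1B|/S2B].
move=> S uS SB SS.
have S1S : {subset S1 <= S} by move=> b bS; apply: SS; rewrite mem_cat bS.
have S2S : {subset S2 <= S} by move=> b bS; apply: SS; rewrite mem_cat bS orbT.
have k1 := H1 S uS SB S1S.
have k2 := H2 S uS SB S2S.
rewrite big_split /=.
have -> : \sum_(i <- S) g1 i + \sum_(i <- S) g2 i - (c1 + c2) =
   (\sum_(i <- S) g1 i - c1) + (\sum_(i <- S) g2 i - c2) by ring.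
apply: (le_lt_trans (ler_normD _ _)).
have -> : e%:C = (e / 2)%:C + (e / 2)%:C by rewrite -rmorphD /=; congr (_%:C); field.
exact: ltrD.
Qed.

Lemma has_sumZ {B : V -> Prop} {g : V -> R[i]} {c} k :
  has_sum B g c -> has_sum B (fun b => k * g b) (k * c).
Proof.
move=> h e e0.
have kr := ge0_real _ (normr_ge0 k).
set r := complex.Re `|k| in kr.
have r0 : 0 <= r by rewrite -lecR -kr normr_ge0.
have e1 : 0 < e / (r + 1) by apply: divr_gt0 => //; lra.
have [S0 [S0B H]] := h _ e1.
exists S0; split => // S uS SB SS.
have k1 := H S uS SB SS.
rewrite -mulr_sumr -mulrBr normrM kr.
have : (r%:C * `|\sum_(b <- S) g b - c|) <= (r * (e / (r + 1)))%:C.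
  by rewrite rmorphM /=; apply: ler_wpM2l; [rewrite lecR| apply: ltW].
move/le_lt_trans; apply; rewrite ltcR.
rewrite mulrA ltr_pdivrMr; nra.
Qed.


Definition onset (A : V -> Prop) :=
  (forall b, A b -> ip b b = 1) /\
  (forall b c, A b -> A c -> b <> c -> ip b c = 0).

Lemma normalize x : x != 0 -> exists y, ip y y = 1 /\
  exists r : R, 0 < r /\ y = r%:C *: x.
Proof.
move=> xn0.
have Nx0 : 0 < N x.
  rewrite lt_def Nge0 andbT; apply/eqP => h; move/eqP: xn0; apply; exact: N0.
pose r := (Num.sqrt (N x))^-1.
have r0 : 0 < r by rewrite invr_gt0 sqrtr_gt0.
exists (r%:C *: x); split; last by exists r.
rewrite ipZl ipZr conjR Nip -!rmorphM /=; congr (_%:C).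
rewrite /r mulrA -expr2 exprVn sqr_sqrtr ?mulVf //; [exact: lt0r_neq0 | exact: ltW].
Qed.

Lemma extend_onb (S : V -> Prop) : onset S ->
  exists B, orthonormal_basis ip B /\ (forall b, S b -> B b).
Proof.
move=> [S1 S2].
pose P (A : V -> Prop) := onset (fun b => A b \/ S b).
have chainP : forall F : set (set V), (F `<=` P)%classic ->
    total_on F subset -> P (\bigcup_(X in F) X)%classic.
  move=> F FP Ftot; split.
    move=> b [[X FX Xb]|Sb]; last exact: S1.
    by case: (FP X FX) => h _; apply: h; left.
  move=> b c [[X FX Xb]|Sb] [[Y FY Yc]|Sc] bc.
  - case: (Ftot X Y FX FY) => [XY|YX].
      by case: (FP Y FY) => _ h; apply: h => //; left => //; apply: XY.
    by case: (FP X FX) => _ h; apply: h => //; [left | left; apply: YX].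
  - by case: (FP X FX) => _ h; apply: h => //; [left | right].
  - by case: (FP Y FY) => _ h; apply: h => //; [right | left].
  - exact: S2.
have [A [PA Amax]] := Zorn_bigcup chainP.
exists (fun b => A b \/ S b); split; last by move=> b Sb; right.
case: PA => PA1 PA2; split => // x xorth.
apply/eqP; apply/negP => /negP xn0.
have [y [yy [r [r0 yx]]]] := normalize x xn0.
have yorth : forall b, A b \/ S b -> ip y b = 0.
  by move=> b hb; rewrite yx ipZl xorth // mulr0.
have yorth' : forall b, A b \/ S b -> ip b y = 0.
  by move=> b hb; rewrite ipC yorth // rmorph0.
have nAy : ~ (A y \/ S y).
  by move=> hy; move: (yorth _ hy); rewrite yy => /eqP; rewrite oner_eq0.
apply: (Amax (fun b => A b \/ b = y)).
  split; first by move=> b Ab; left.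
  by move=> h; apply: nAy; left; apply: (h y); right.
split.
  move=> b [[Ab|->]|Sb]; [by apply: PA1; left| exact: yy| by apply: PA1; right].
move=> b c [[Ab|->]|Sb] [[Ac|->]|Sc] bc.
- by apply: PA2 => //; left.
- by apply: yorth'; left.
- by apply: PA2 => //; [left|right].
- by apply: yorth; left.
- by [].
- by apply: yorth; right.
- by apply: PA2 => //; [right|left].
- by apply: yorth'; right.
- by apply: PA2 => //; right.
Qed.

Definition proj (S : seq V) x := \sum_(b <- S) ip x b *: b.

Lemma collapse (B : V -> Prop) (S : seq V) (G : V -> R[i]) b :
  onset B -> uniq S -> (forall c, c \in S -> B c) -> b \in S ->
  \sum_(c <- S) G c * ip b c = G b.
Proof.
move=> [B1 B2] uS SB bS.
rewrite (bigD1_seq b) //= (B1 b (SB b bS)) mulr1 big_seq_cond big1 ?addr0 //.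
move=> c /andP[cS cb]; rewrite (B2 b c (SB b bS) (SB c cS)) ?mulr0 //.
by move=> h; move: cb; rewrite h eqxx.
Qed.

Lemma ip_proj_l S x y : ip (proj S x) y = \sum_(b <- S) ip x b * ip b y.
Proof. by rewrite /proj ip_suml; apply: eq_bigr => b _; rewrite ipZl. Qed.

Lemma ip_proj_r S x y : ip y (proj S x) = \sum_(b <- S) ip b x * ip y b.
Proof. by rewrite /proj ip_sumr; apply: eq_bigr => b _; rewrite ipZr -ipC. Qed.

Lemma ip_proj_proj (B : V -> Prop) S x y : onset B -> uniq S -> (forall c, c \in S -> B c) ->
  ip (proj S x) (proj S y) = \sum_(b <- S) ip x b * ip b y.
Proof.
move=> oB uS SB; rewrite ip_proj_l big_seq [RHS]big_seq; apply: eq_bigr => b bS.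
by rewrite ip_proj_r (collapse _ _ (fun c => ip c y) _ oB uS SB bS).
Qed.

Lemma ip_resid (B : V -> Prop) S x y : onset B -> uniq S -> (forall c, c \in S -> B c) ->
  ip (x - proj S x) (y - proj S y) = ip x y - \sum_(b <- S) ip x b * ip b y.
Proof.
move=> oB uS SB; rewrite !ipBl !ipBr (ip_proj_proj _ _ x y oB uS SB) ip_proj_l ip_proj_r.
have -> : \sum_(b <- S) ip b y * ip x b = \sum_(b <- S) ip x b * ip b y.
  by apply: eq_bigr => b _; rewrite mulrC.
ring.
Qed.

Definition pars v := forall B, orthonormal_basis ip B ->
  has_sum B (fun b => ip b v * ip v b) (ip v v).

Lemma onb_onset {B} : orthonormal_basis ip B -> onset B.
Proof. by case. Qed.

Lemma small_resid {B : V -> Prop} {S x e} : onset B -> uniq S -> (forall c, c \in S -> B c) ->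
  `|\sum_(b <- S) ip b x * ip x b - ip x x| < e%:C -> N (x - proj S x) < e.
Proof.
move=> oB uS SB h.
have h2 := le_lt_trans (normc_ge_Re _) h; rewrite ltcR in h2.
have -> : N (x - proj S x) = - complex.Re (\sum_(b <- S) ip b x * ip x b - ip x x).
  rewrite /N (ip_resid _ _ x x oB uS SB).
  have -> : \sum_(b <- S) ip b x * ip x b = \sum_(b <- S) ip x b * ip b x.
    by apply: eq_bigr => b _; rewrite mulrC.
  rewrite !ReB; ring.
have := ler_normr (complex.Re (\sum_(b <- S) ip b x * ip x b - ip x x)).
have := ler_norm (complex.Re (\sum_(b <- S) ip b x * ip x b - ip x x)).
move=> _ h3; apply: le_lt_trans h2; rewrite -normrN; exact: ler_norm.
Qed.

Lemma cross {x y} : pars x -> pars y -> forall {B}, orthonormal_basis ip B ->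
  has_sum B (fun b => ip x b * ip b y) (ip x y).
Proof.
move=> px py B oB e e0.
have oB' := onb_onset oB.
have [S1 [S1B H1]] := px B oB e e0; have [S2 [S2B H2]] := py B oB e e0.
exists (S1 ++ S2); split.
  by move=> b; rewrite mem_cat => /orP[/S1B|/S2B].
move=> S uS SB SS.
have S1S : {subset S1 <= S} by move=> b bS; apply: SS; rewrite mem_cat bS.
have S2S : {subset S2 <= S} by move=> b bS; apply: SS; rewrite mem_cat bS orbT.
have hx := small_resid oB' uS SB (H1 S uS SB S1S).
have hy := small_resid oB' uS SB (H2 S uS SB S2S).
set z := ip (x - proj S x) (y - proj S y).
have hz : z = ip x y - \sum_(b <- S) ip x b * ip b y by rewrite /z (ip_resid _ _ _ _ oB' uS SB).
have cs := CS (x - proj S x) (y - proj S y).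
rewrite -/z (ipC (x - proj S x)) -/z in cs.
have cs2 : complex.Re (z * Num.conj z) < e ^+ 2.
  apply: (le_lt_trans cs); rewrite expr2.
  have := Nge0 (x - proj S x); have := Nge0 (y - proj S y); nra.
have -> : \sum_(b <- S) ip x b * ip b y - ip x y = - z by rewrite hz; ring.
rewrite normrN -(ltr_pXn2r (n := 2)) // ?nnegrE ?normr_ge0 ?lecR ?ltW //.
by rewrite normCK mulJ_real -rmorphXn ltcR.
Qed.

Lemma has_sum_ext {B : V -> Prop} {g g' : V -> R[i]} {c c'} :
  has_sum B g c -> (forall b, g b = g' b) -> c = c' -> has_sum B g' c'.
Proof. by move=> h e <-; have <- : g = g' by apply: funext. Qed.

Lemma pars_comb a x y : pars x -> pars y -> pars (a *: x + y).
Proof.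
move=> px py B oB.
have h := has_sumD (has_sumD (has_sumZ (a * Num.conj a) (px B oB))
                             (has_sumZ (Num.conj a) (cross py px oB)))
                   (has_sumD (has_sumZ a (cross px py oB)) (py B oB)).
apply: (has_sum_ext h).
  by move=> b /=; rewrite !ipDr !ipDl !ipZr !ipZl; ring.
by rewrite !ipDr !ipDl !ipZr !ipZl; ring.
Qed.

Definition Qop v := fun u => ((N v)^-1)%:C *: (ip u v *: v).

Lemma dens_Q v : v != 0 -> pars v -> density ip (Qop v).
Proof.
move=> vn0 pv.
have Nv0 : 0 < N v.
  rewrite lt_def Nge0 andbT; apply/eqP => h; move/eqP: vn0; apply; exact: N0.
set c := (N v)^-1.
have c0 : 0 < c by rewrite invr_gt0.
have cN : c * N v = 1 by rewrite mulVf // lt0r_neq0.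
split.
- move=> a x y; rewrite /Qop ipl scalerDl scalerDr; congr (_ + _).
  by rewrite !scalerA; congr (_ *: _); ring.
- exists 1 => x; rewrite mul1r /hnorm ler_sqrt ?Nge0 // -/(N x) -/(N (Qop v x)).
  have -> : N (Qop v x) = c ^+ 2 * N v * complex.Re (ip x v * ip v x).
    rewrite /N /Qop scalerA ipZl ipZr rmorphM /= conjR -ipC Nip.
    rewrite -Re_realM; congr complex.Re; rewrite /c /= !rmorphM /=. ring.
  have h := CS x v.
  have : c ^+ 2 * N v * complex.Re (ip x v * ip v x) <= c ^+ 2 * N v * (N x * N v).
    by rewrite ler_pM2l // mulr_gt0 // exprn_gt0.
  move/le_trans; apply; rewrite le_eqVlt; apply/orP; left; apply/eqP.
  have -> : c ^+ 2 * N v * (N x * N v) = (c * N v) ^+ 2 * N x by ring.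
  by rewrite cN expr1n mul1r.
- move=> x; rewrite /Qop !ipZl (ipC x v); apply: mulr_ge0.
    by rewrite lecR ltW.
  exact: mul_conjC_ge0.
- move=> B oB; apply: (has_sum_ext (has_sumZ c%:C (pv B oB))).
    by move=> b; rewrite /Qop !ipZl mulrA.
  by rewrite Nip -rmorphM /= cN.
Qed.

Lemma rank_one E : is_projection ip E -> density ip E ->
  exists e, ip e e = 1 /\ forall u, E u = ip u e *: e.
Proof.
move=> [Eid Esa] [Elin _ Epos Etr].
have E0 : E 0 = 0.
  move: (Elin 1 0 0); rewrite !scale1r addr0 => h.
  by apply: (addrI (E 0)); rewrite addr0 -h.
have EZ a x : E (a *: x) = a *: E x by rewrite -[a *: x]addr0 Elin E0 addr0.
have ED x y : E (x + y) = E x + E y by move: (Elin 1 x y); rewrite !scale1r.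
have [x Ex0] : exists x, E x != 0.
  apply: contrapT => hn.
  have Ez : forall x, E x = 0.
    by move=> x; apply: contrapT => h; apply: hn; exists x; apply/eqP.
  have [B0 [oB0 _]] := @extend_onb (fun _ => False) (conj (fun b f => False_ind _ f) (fun b c f => False_ind _ f)).
  have [S0 [S0B H]] := Etr B0 oB0 1 ltr01.
  have := H (undup S0) (undup_uniq S0).
  have SB : forall b, b \in undup S0 -> B0 b by move=> b; rewrite mem_undup => /S0B.
  move=> /(_ SB); have SS : {subset S0 <= undup S0} by move=> b; rewrite mem_undup.
  move=> /(_ SS); rewrite big1 => [|b _]; last by rewrite Ez ip0l.
  by rewrite sub0r normrN normr1 ltxx.
have [e [ee [r [r0 ex]]]] := normalize _ Ex0.
have Ee : E e = e by rewrite ex EZ Eid.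
exists e; split => // u.
suff : E u - ip (E u) e *: e = 0.
  by move/eqP; rewrite subr_eq0 => /eqP ->; rewrite Esa Ee.
set w := E u - ip (E u) e *: e.
apply/eqP; apply/negP => /negP wn0.
have Ew : E w = w.
  have h := Elin (- ip (E u) e) e (E u).
  by rewrite /w addrC -scaleNr h Ee Eid.
have we : ip w e = 0 by rewrite /w ipBl ipZl ee mulr1 subrr.
have [w' [ww [s [s0 wx]]]] := normalize _ wn0.
have Ew' : E w' = w' by rewrite wx EZ Ew.
have w'e : ip w' e = 0 by rewrite wx ipZl we mulr0.
have ew' : ip e w' = 0 by rewrite ipC w'e rmorph0.
have new : e != w'.
  by apply/eqP => h; move: w'e; rewrite -h ee => /eqP; rewrite oner_eq0.
have oS : onset (fun b => b = e \/ b = w').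
  split; first by move=> b [->|->].
  move=> b c [->|->] [->|->] //.
have [B1 [oB1 SB1]] := extend_onb _ oS.
have := has_sum_le (fun b _ => Epos b) (Etr B1 oB1) [:: e; w'].
rewrite /= andbT inE new => /(_ isT).
have TB : forall b, b \in [:: e; w'] -> B1 b.
  by move=> b; rewrite !inE => /orP[/eqP ->|/eqP ->]; apply: SB1; [left|right].
move=> /(_ TB); rewrite !big_cons big_nil addr0 Ee Ew' ee ww /=.
by move=> h; have : (1 : R) + 1 <= 1 by []; lra.
Qed.

Lemma pars_rank1 E e : density ip E -> (forall u, E u = ip u e *: e) -> ip e e = 1 ->
  pars e.
Proof.
move=> [_ _ _ Etr] hE ee B oB; apply: (has_sum_ext (Etr B oB)) => //.
by move=> b; rewrite hE ipZl.
Qed.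

Definition P v := fun u => ip u v *: v.

Lemma key_id (e w : V) (al : R[i]) (lam q : R) u :
  al * Num.conj al = q%:C ->
  lam%:C *: P (al *: e + w) u + P (e - (lam%:C * Num.conj al) *: w) u =
  (lam * q + 1)%:C *: P e u + (lam ^+ 2 * q + lam)%:C *: P w u.
Proof.
move=> hq; rewrite /P /= !ipDr ipNr !ipZr.
rewrite rmorphM /= conjR conjCK.
set a := ip u e; set b := ip u w.
rewrite !scalerDr !scalerN !scalerA.
rewrite addrACA -scalerDl -scaleNr -scalerDl.
congr (_ *: _ + _ *: _); rewrite !rmorphD !rmorphM /= ?rmorphXn /= -hq; ring.
Qed.

Lemma lower_lam e f g (lam : R) :
  ip e e = 1 -> ip f f = 1 -> pars e -> pars f ->
  density ip (P e) -> density ip (P f) ->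
  affine_on (density ip) g -> (forall z, density ip z -> 0 <= g z <= 1) ->
  g (P e) = 1 -> 0 < lam ->
  0 < complex.Re (ip f e * ip e f) -> complex.Re (ip f e * ip e f) < 1 ->
  complex.Re (ip f e * ip e f) - lam * complex.Re (ip f e * ip e f) *
     (1 - complex.Re (ip f e * ip e f)) <= g (P f).
Proof.
move=> ee ff pe pf dPe dPf gaff grange gE lam0.
set q := complex.Re (ip f e * ip e f) => q0 q1.
set al := ip f e.
have aC : Num.conj al = ip e f by rewrite /al -ipC.
have hq : al * Num.conj al = q%:C by rewrite (mulJ_real al) aC.
pose w := f - al *: e.
have we : ip w e = 0 by rewrite /w ipBl ipZl ee mulr1 /al subrr.
have ew : ip e w = 0 by rewrite ipC we rmorph0.
have ww : ip w w = (1 - q)%:C.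
  rewrite /w !ipBl !ipBr !ipZl !ipZr ff ee -/al -aC. rewrite rmorphB rmorph1 /= -hq; ring.
have Nw : N w = 1 - q by rewrite /N ww.
have wn0 : w != 0.
  by apply/eqP => h; move: Nw; rewrite h /N ip0r /=; lra.
have pw : pars w by rewrite /w addrC -scaleNr; apply: pars_comb.
pose k := lam%:C * Num.conj al.
pose v := e - k *: w.
have pv : pars v by rewrite /v addrC -scaleNr; apply: pars_comb.
pose D := 1 + lam ^+ 2 * q * (1 - q).
have vv : ip v v = D%:C.
  rewrite /v /k !ipBl !ipBr !ipZl !ipZr ee ew we ww rmorphM /= conjR conjCK.
  rewrite /D !(rmorphB, rmorphD, rmorphM, rmorph1) /= -hq; ring.
have Nv : N v = D by rewrite /N vv.
have q1' : 0 < 1 - q by lra.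
have qq : 0 < q * (1 - q) by apply: mulr_gt0.
have D1 : 1 <= D.
  rewrite /D lerDl -mulrA; apply: mulr_ge0; [exact: sqr_ge0| exact: ltW].
have vn0 : v != 0.
  by apply/eqP => h; move: Nv; rewrite h /N ip0r /=; lra.
have drho := dens_Q _ vn0 pv; have dEp := dens_Q _ wn0 pw.
pose s := (D + lam)^-1.
have Dl : D + lam != 0 by apply: lt0r_neq0; lra.
have hs : s * (D + lam) = 1 by rewrite /s mulVf.
have s0 : 0 < s by rewrite /s invr_gt0; lra.
pose t := lam * s; pose x := (lam * q + 1) * s.
have hid : cvx t (P f) (Qop v) = cvx x (P e) (Qop w).
  apply: funext => u; rewrite /cvx /Qop -/(P v u) -/(P w u) Nv Nw.
  have fe : f = al *: e + w by rewrite /w addrC subrK.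
  have := key_id e w al lam q u hq; rewrite -fe -/k -/v.
  generalize (P f u) (P v u) (P e u) (P w u) => Pf Pv Pe Pw key.
  transitivity (s%:C *: (lam%:C *: Pf + Pv)).
    rewrite scalerDr !scalerA -!rmorphM /=; congr (_ *: _ + _ *: _); congr (_%:C).
      by rewrite /t mulrC.
    by rewrite /t /s; field; apply/andP; split => //; apply: lt0r_neq0; lra.
  rewrite key scalerDr !scalerA -!rmorphM /=; congr (_ *: _ + _ *: _); congr (_%:C).
    by rewrite /x mulrC.
  rewrite /x /s /D; field; rewrite -/D; apply/andP; split => //; apply: lt0r_neq0; lra.
have t01 : 0 <= t <= 1.
  apply/andP; split; first by rewrite /t; apply: mulr_ge0; lra.
  have : t * (D + lam) = lam by rewrite /t -mulrA hs mulr1.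
  move=> h; rewrite -(ler_pM2r (_ : 0 < D + lam)); last lra.
  rewrite h mul1r; lra.
have x01 : 0 <= x <= 1.
  apply/andP; split; first by rewrite /x; apply: mulr_ge0; [nra| lra].
  have : x * (D + lam) = lam * q + 1 by rewrite /x -mulrA hs mulr1.
  move=> h; rewrite -(ler_pM2r (_ : 0 < D + lam)); last lra.
  rewrite h mul1r /D. nra.
have h1 := gaff _ _ _ dPf drho t01.
have h2 := gaff _ _ _ dPe dEp x01.
rewrite hid h2 gE in h1.
have /andP[r0 r1] := grange _ drho.
have /andP[y0 y1] := grange _ dEp.
set G := g (P f) in h1 *; set r := g (Qop v) in h1 r0 r1; set y := g (Qop w) in h1 y0 y1.
have hx1 : x <= 1 by case/andP: x01.
have ht1 : t <= 1 by case/andP: t01.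
have k1 : 0 <= (1 - x) * y by apply: mulr_ge0; lra.
have k2 : (1 - t) * r <= 1 - t by rewrite ler_piMr //; lra.
have k3 : x - (1 - t) <= t * G by lra.
have k4 : t * G - t * (q - lam * q * (1 - q)) >= 0.
  rewrite /t /x in k3 *.
  have hs' : s + s * lam ^+ 2 * q * (1 - q) + s * lam = s * (D + lam) by rewrite /D; ring.
  rewrite hs in hs'.
  nra.
have lt0 : 0 < t by rewrite /t mulr_gt0.
rewrite -subr_ge0; rewrite -(pmulr_rge0 _ lt0); rewrite mulrBr; lra.
Qed.


Lemma q_facts e f : ip e e = 1 -> ip f f = 1 ->
  [/\ ip f e * ip e f = (complex.Re (ip f e * ip e f))%:C,
      0 <= complex.Re (ip f e * ip e f),
      complex.Re (ip f e * ip e f) <= 1 &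
      (complex.Re (ip f e * ip e f) = 1 -> P f = P e)].
Proof.
move=> ee ff.
set q := complex.Re (ip f e * ip e f).
set al := ip f e.
have aC : Num.conj al = ip e f by rewrite /al -ipC.
have hq : al * Num.conj al = q%:C by rewrite (mulJ_real al) aC.
split.
- by rewrite -aC hq.
- by rewrite /q -aC ReJge0.
- have := CS f e; rewrite /N ee ff /= mulr1 -/al (ipC f e) -/al aC //.
- move=> q1.
  pose w := f - al *: e.
  have ww : ip w w = (1 - q)%:C.
    rewrite /w !ipBl !ipBr !ipZl !ipZr ff ee -/al -aC rmorphB rmorph1 /= -hq; ring.
  have w0 : w = 0 by apply: ipdef; rewrite ww q1 subrr.
  have fe : f = al *: e by apply/eqP; rewrite -subr_eq0; apply/eqP.
  apply: funext => u; rewrite /P fe ipZr scalerA.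
  congr (_ *: _).
  have h1 : al * Num.conj al = 1 by rewrite hq q1 rmorph1.
  by transitivity (ip u e * (al * Num.conj al)); [ring | rewrite h1 mulr1].
Qed.

Lemma lower e f g :
  ip e e = 1 -> ip f f = 1 -> pars e -> pars f ->
  density ip (P e) -> density ip (P f) ->
  affine_on (density ip) g -> (forall z, density ip z -> 0 <= g z <= 1) ->
  g (P e) = 1 -> complex.Re (ip f e * ip e f) <= g (P f).
Proof.
move=> ee ff pe pf dPe dPf gaff grange gE.
have [_ q0 q1 qPf] := q_facts _ _ ee ff.
set q := complex.Re (ip f e * ip e f) in q0 q1 qPf *.
have /andP[G0 G1] := grange _ dPf.
have [qz|qnz] := eqVneq q 0; first by rewrite qz.
have [qo|qno] := eqVneq q 1; first by rewrite (qPf qo) gE qo.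
have qp : 0 < q by rewrite lt_def qnz q0.
have ql : q < 1 by rewrite lt_def eq_sym qno q1.
have qq : 0 < q * (1 - q) by apply: mulr_gt0; lra.
apply/ler_addgt0Pr => eps eps0.
have lam0 : 0 < eps / (q * (1 - q)) by apply: divr_gt0.
have := lower_lam _ _ _ _ ee ff pe pf dPe dPf gaff grange gE lam0 qp ql.
move=> h.
have hq' : complex.Re (ip f e * ip e f) = q by [].
rewrite hq' in h.
clearbody q.
have hh : eps / (q * (1 - q)) * q * (1 - q) = eps.
  by field; apply/andP; split; apply: lt0r_neq0; lra.
lra.
Qed.

Lemma upper e f : ip e e = 1 ->
  exists g, [/\ affine_on (density ip) g, (forall z, density ip z -> 0 <= g z <= 1),
     g (P e) = 1 & g (P f) = complex.Re (ip f e * ip e f)].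
Proof.
move=> ee.
exists (fun rho => complex.Re (ip (rho e) e)); split.
- move=> x y t _ _ _; rewrite /cvx ipDl !ipZl ReD !Re_realM //.
- move=> z [_ _ zpos ztr]; apply/andP; split.
    by have := zpos e; rewrite lecE => /andP[_].
  have oS : onset (fun b => b = e).
    by split => [b ->|b c -> -> //].
  have [B [oB SB]] := extend_onb _ oS.
  have := has_sum_le (fun b _ => zpos b) (ztr B oB) [:: e] isT.
  have TB : forall b, b \in [:: e] -> B b by move=> b; rewrite inE => /eqP ->; apply: SB.
  by move=> /(_ TB); rewrite big_cons big_nil addr0.
- by rewrite /P ipZl ee mulr1.
- by rewrite /P ipZl mulrC.
Qed.

Lemma ratio_val e f : ip e e = 1 -> ip f f = 1 -> pars e -> pars f ->
  density ip (P e) -> density ip (P f) ->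
  affine_ratio (density ip) (P e) (P f) = complex.Re (ip f e * ip e f).
Proof.
move=> ee ff pe pf dPe dPf.
rewrite /affine_ratio; set A := (X in inf X).
have Aq : A (complex.Re (ip f e * ip e f)).
  have [g [g1 g2 g3 g4]] := upper _ f ee.
  by exists g; split.
have lb : lbound A (complex.Re (ip f e * ip e f)).
  move=> r [g [g1 g2 g3 ->]]; exact: lower.
apply/eqP; rewrite eq_le; apply/andP; split.
  by apply: (ge_inf _ Aq); exists (complex.Re (ip f e * ip e f)).
by apply: lb_le_inf => //; exists (complex.Re (ip f e * ip e f)).
Qed.

Lemma main E F : is_projection ip E -> is_projection ip F ->
  extreme_point (density ip) E -> extreme_point (density ip) F ->
  has_trace ip (E \o F) (affine_ratio (density ip) E F)%:C.
Proof.
move=> prE prF [dE _] [dF _].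
have [e [ee hE]] := rank_one _ prE dE.
have [f [ff hF]] := rank_one _ prF dF.
have pe := pars_rank1 _ _ dE hE ee.
have pf := pars_rank1 _ _ dF hF ff.
have EP : E = P e by apply: funext => u; rewrite hE.
have FP : F = P f by apply: funext => u; rewrite hF.
subst E F.
rewrite ratio_val //.
have [qC _ _ _] := q_facts _ _ ee ff.
move=> B oB; apply: (has_sum_ext (has_sumZ (ip f e) (cross pe pf oB))).
  by move=> b /=; rewrite /P !ipZl; ring.
by rewrite qC.
Qed.

End IP.

Theorem lemma1 (R : realType) (V : lmodType R[i]) (ip : V -> V -> R[i])
  (HV : is_hilbert ip) (E F : V -> V) :
  is_projection ip E -> is_projection ip F ->
  extreme_point (density ip) E -> extreme_point (density ip) F ->
  has_trace ip (E \o F) (affine_ratio (density ip) E F)%:C.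
Proof. exact: main. Qed.
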